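(* Let $S_1,S_2$ be two non-empty intervals of extended $\mathbb Z$-segments with $\mathrm{Supp}(S_1)=\mathrm{Supp}(S_2)$. Then: (a) $S_1\cap S_2$ is an interval; (b) there are at most $3$ intervals that are adjacent to $S_1$; (c) if $|S_1|>1$, $|S_2|>1$, $|S_1\cap S_2|=1$, and there exists an interval $S_1'$ adjacent to $S_1$ with $|S_1'\cap S_2|>0$, then $|S_1'\cap S_2|=2$.
   Context: A $\mathbb Z$-segment is $[A,B]=\{A,A-1,\dots,B\}$ with $A\ge B$ integers; its length is $b=A-B+1$. A virtual extended $\mathbb Z$-segment is a triple $([A,B],l,\eta)$ with $l\in\mathbb Z$, $l\le b/2$, and $\eta\in\{\pm1\}$, where if $b=2l$ the values $\eta$ and $-\eta$ are identified (otherwise not). It is an extended $\mathbb Z$-segment if moreover $l\ge0$. Its support is $\mathrm{Supp}=[A,B]$. Two virtual extended $\mathbb Z$-segments $([A_i,B_i],l_i,\eta_i)$ are adjacent if they have the same support and either there are lifts with $\eta_1=\eta_2$ and $|l_1-l_2|=1$, or $b$ is odd, $l_1=l_2=(b-1)/2$ and $\eta_1=-\eta_2$. A virtual interval is a finite set $\{\mathfrak e_1,\dots,\mathfrak e_r\}$ ($r\ge0$) of pairwise distinct virtual extended $\mathbb Z$-segments with $\mathfrak e_i$ adjacent to $\mathfrak e_{i+1}$ for all $i$; its support is the common support; an interval is a virtual interval consisting of extended $\mathbb Z$-segments. Two non-empty virtual intervals $S_1,S_2$ are adjacent if $S_1\cup S_2$ is a virtual interval and $|S_1|+1=|S_1\cup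 S_2|=|S_2|+1$. Two intervals $S_1,S_2$ are adjacent if there exist virtual intervals $S_1^+,S_2^+$ that are adjacent and satisfy $S_i=S_i^+\cap\{\text{extended }\mathbb Z\text{-segments}\}$. *)

(* Defs.v *)
From HB Require Import structures.
From mathcomp Require Import all_boot all_order all_algebra.
From mathcomp Require Import finmap.
Set Implicit Arguments. Unset Strict Implicit. Unset Printing Implicit Defensive.
Import Order.TTheory GRing.Theory Num.Theory.
Local Open Scope ring_scope.
Local Open Scope fset_scope.

(* Raw data ([A,B], l, eta) : (A, B, l, eta), with eta = true for +1 and
   eta = false for -1. *)
Definition raw_vseg := (int * int * int * bool)%type.

Definition rA (x : raw_vseg) : int := x.1.1.1.
Definition rB (x : raw_vseg) : int := x.1.1.2.
Definition rl (x : raw_vseg) : int := x.1.2.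
Definition reta (x : raw_vseg) : bool := x.2.
Definition rlen (x : raw_vseg) : int := rA x - rB x + 1.

(* Well-formedness: A >= B, l <= b/2, and when b = 2l the identification
   eta ~ -eta is implemented by choosing the canonical representative
   eta = +1 (true). *)
Definition wf_vseg (x : raw_vseg) : bool :=
  [&& rB x <= rA x, 2 * rl x <= rlen x & ((2 * rl x == rlen x) ==> reta x)].

Definition vseg := {x : raw_vseg | wf_vseg x}.

Definition vA (e : vseg) := rA (val e).
Definition vB (e : vseg) := rB (val e).
Definition vl (e : vseg) := rl (val e).
Definition veta (e : vseg) := reta (val e).
Definition vlen (e : vseg) := rlen (val e).
Definition supp (e : vseg) : int * int := (vA e, vB e).

Definition is_ext (e : vseg) : bool := 0 <= vl e.

(* Adjacency of virtual extended Z-segments.  "There are lifts with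
   eta1 = eta2": a class with b = 2l contains both signs, so lifts with
   equal signs exist iff b = 2 l1 or b = 2 l2 or the canonical signs agree. *)
Definition vadj (e1 e2 : vseg) : bool :=
  (supp e1 == supp e2) &&
  ( (((2 * vl e1 == vlen e1) || (2 * vl e2 == vlen e2) || (veta e1 == veta e2))
      && (`|vl e1 - vl e2| == 1))
    || [&& ~~ (2 %| `|vlen e1|)%N, 2 * vl e1 == vlen e1 - 1,
           vl e1 == vl e2 & veta e1 != veta e2] ).

Definition is_vinterval (S : {fset vseg}) : Prop :=
  exists s : seq vseg, [/\ uniq s, S =i s & sorted vadj s].

Definition is_interval (S : {fset vseg}) : Prop :=
  is_vinterval S /\ (forall e, e \in S -> is_ext e).

Definition ext_part (S : {fset vseg}) : {fset vseg} :=
  [fset e in S | is_ext e].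

Definition adj_vinterval (S1 S2 : {fset vseg}) : Prop :=
  [/\ is_vinterval S1, is_vinterval S2, S1 != fset0, S2 != fset0 &
      [/\ is_vinterval (S1 `|` S2),
      (#|` S1| + 1 = #|` S1 `|` S2|)%N & (#|` S1 `|` S2| = #|` S2| + 1)%N]].

Definition adj_interval (S1 S2 : {fset vseg}) : Prop :=
  [/\ is_interval S1, is_interval S2 &
      exists S1p S2p, [/\ adj_vinterval S1p S2p,
                          S1 = ext_part S1p & S2 = ext_part S2p]].

(* Supp(S1) = Supp(S2) (for non-empty S1, S2: all members share the support) *)
Definition same_support (S1 S2 : {fset vseg}) : Prop :=
  forall e1 e2, e1 \in S1 -> e2 \in S2 -> supp e1 = supp e2.

(* Main.v *)
Require Import Defs.
From HB Require Import structures.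
From mathcomp Require Import all_boot all_order all_algebra finmap zify.
Import Order.TTheory GRing.Theory Num.Theory.
Set Implicit Arguments. Unset Strict Implicit. Unset Printing Implicit Defensive.
Local Open Scope fset_scope.
Local Open Scope ring_scope.

Definition pos (e : vseg) : int := if veta e then vl e else vlen e - vl e.
Definition bl (s : int * int) : int := s.1 - s.2 + 1.
Definition valid (s : int * int) : bool := s.2 <= s.1.
Definition mkr (s : int * int) (p : int) : raw_vseg :=
  if 2 * p <= bl s then (s.1, s.2, p, true) else (s.1, s.2, bl s - p, false).
Lemma wf0 : wf_vseg (0, 0, 0, true). Proof. by []. Qed.
Definition v0 : vseg := exist (fun x => is_true (wf_vseg x)) _ wf0.
Definition mk s p : vseg := insubd v0 (mkr s p).

Lemma wf_mkr s p : valid s -> wf_vseg (mkr s p).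
Proof.
case: s => A B; rewrite /valid /mkr /bl /= => h; case: ifP => h2;
 rewrite /wf_vseg /rlen /rA /rB /rl /reta /=; lia.
Qed.

Lemma val_mk s p : valid s -> val (mk s p) = mkr s p.
Proof. by move=> h; rewrite val_insubd wf_mkr. Qed.

Lemma supp_mk s p : valid s -> supp (mk s p) = s.
Proof.
move=> h; rewrite /supp /vA /vB val_mk // /mkr; case: ifP => _; by case: s {h}.
Qed.

Lemma pos_mk s p : valid s -> pos (mk s p) = p.
Proof.
move=> h; rewrite /pos /veta /vl /vlen val_mk // /mkr; case: leP => _ /=;
 rewrite /bl /rlen /rA /rB /rl /=; lia.
Qed.

Lemma valid_supp e : valid (supp e).
Proof. case: e => x hx; case/and3P: (hx) => h _ _; exact: h. Qed.

Lemma mk_pos e : mk (supp e) (pos e) = e.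
Proof.
apply: val_inj; rewrite val_mk ?valid_supp //.
case: e => [[[[A B] l] et] w]; case/and3P: (w); rewrite /pos /mkr /supp /bl /vA /vB /veta /vl /vlen
  /rlen /rA /rB /rl /reta /= => h1 h2 h3.
clear w; case: et h3 => /= h3; case: ifP => h4 //; try (congr (_,_,_,_); lia); exfalso; lia.
Qed.

Lemma pos_inj e1 e2 : supp e1 = supp e2 -> pos e1 = pos e2 -> e1 = e2.
Proof. by move=> h1 h2; rewrite -(mk_pos e1) -(mk_pos e2) h1 h2. Qed.

Lemma vadjE e1 e2 : vadj e1 e2 = (supp e1 == supp e2) && (`|pos e1 - pos e2| == 1).
Proof.
rewrite /vadj; case: (supp e1 =P supp e2) => //= hs.
move: hs; case: e1 => [[[[A B] l] et] w]; case/and3P: (w);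
case: e2 => [[[[A' B'] l'] et'] w']; case/and3P: (w').
rewrite /pos /supp /vA /vB /veta /vl /vlen /rlen /rA /rB /rl /reta /= => h1 h2 h3 h4 h5 h6 [??]; subst.
clear w w'; case: et h6 => /= h6; case: et' h3 => /= h3; lia.
Qed.

Lemma extE e : is_ext e = (0 <= pos e) && (pos e <= bl (supp e)).
Proof.
case: e => [[[[A B] l] et] w]; case/and3P: (w).
rewrite /is_ext /bl /pos /supp /vA /vB /veta /vl /vlen /rlen /rA /rB /rl /reta /= => h1 h2 h3.
clear w; case: et h3 => /= h3; lia.
Qed.
Definition blkseq s (lo hi : int) : seq vseg :=
  map (fun i : nat => mk s (lo + i%:Z)) (iota 0 (if lo <= hi then absz (hi - lo + 1) else 0%N)).

Lemma mem_blkseq s lo hi e : valid s ->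
  (e \in blkseq s lo hi) = (supp e == s) && (lo <= pos e <= hi).
Proof.
move=> hs; apply/mapP/idP.
  move=> [i]; rewrite mem_iota => hi' ->; rewrite supp_mk // pos_mk // eqxx /=.
  move: hi'; case: ifP => h hi'; lia.
move=> /andP [/eqP he hp]; exists (absz (pos e - lo)); first by rewrite mem_iota; case: ifP => h; lia.
rewrite -{1}(mk_pos e) he; congr mk; lia.
Qed.

Lemma uniq_blkseq s lo hi : valid s -> uniq (blkseq s lo hi).
Proof.
move=> hs; rewrite map_inj_in_uniq ?iota_uniq // => i j _ _ /(congr1 pos).
rewrite !pos_mk // => h; lia.
Qed.

Lemma path_iota (r : rel nat) m k : (forall i, r i i.+1) -> path r m (iota m.+1 k).
Proof. move=> hr; elim: k m => //= k IH m; rewrite hr IH. done. Qed.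

Lemma sorted_blkseq s lo hi : valid s -> sorted vadj (blkseq s lo hi).
Proof.
move=> hs; rewrite /blkseq sorted_map.
case: (if _ then _ else _) => //= n; apply: path_iota => i /=.
rewrite vadjE !supp_mk // !pos_mk // eqxx /=; lia.
Qed.

Definition blkset s lo hi : {fset vseg} := seq_fset tt (blkseq s lo hi).

Lemma in_blkset s lo hi e : valid s ->
  (e \in blkset s lo hi) = (supp e == s) && (lo <= pos e <= hi).
Proof. by move=> hs; rewrite seq_fsetE mem_blkseq. Qed.

Lemma card_blkset s lo hi : valid s ->
  #|` blkset s lo hi| = (if lo <= hi then absz (hi - lo + 1) else 0%N).
Proof.
move=> hs; rewrite size_seq_fset undup_id ?uniq_blkseq //.
by rewrite size_map size_iota.
Qed.

Lemma blkset_vint s lo hi : valid s -> is_vinterval (blkset s lo hi).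
Proof.
move=> hs; exists (blkseq s lo hi); split.
- exact: uniq_blkseq.
- by move=> e; rewrite seq_fsetE.
- exact: sorted_blkseq.
Qed.

Lemma mk_blkset s lo hi p : valid s -> (mk s p \in blkset s lo hi) = (lo <= p <= hi).
Proof. by move=> hs; rewrite in_blkset // supp_mk // pos_mk // eqxx. Qed.

Lemma blk_ext s l h l' h' : valid s -> (forall p, (l <= p <= h) = (l' <= p <= h')) ->
  blkset s l h = blkset s l' h'.
Proof. move=> hs H; apply/fsetP => e; by rewrite !in_blkset // H. Qed.

Lemma blkI s l1 h1 l2 h2 : valid s ->
  blkset s l1 h1 `&` blkset s l2 h2 = blkset s (Num.max l1 l2) (Num.min h1 h2).
Proof.
move=> hs; apply/fsetP => e; rewrite in_fsetI !in_blkset //.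
case: (supp e == s) => //=; lia.
Qed.

Lemma chain_char t x : sorted vadj (x :: t) -> uniq (x :: t) ->
  exists lo hi, ((pos x == lo) || (pos x == hi)) /\
    forall e, (e \in x :: t) = (supp e == supp x) && (lo <= pos e <= hi).
Proof.
elim: t x => [|y t IH] x.
  move=> _ _; exists (pos x), (pos x); split; first by rewrite eqxx.
  move=> e; rewrite inE; apply/idP/idP.
    by move/eqP->; rewrite eqxx lexx.
  move/andP=> [/eqP h1 h2]; apply/eqP; apply: pos_inj => //; lia.
rewrite /= => /andP [hxy hs] /andP [hx hu].
have [lo [hi [hy hm]]] := IH y hs hu.
move: hxy; rewrite vadjE => /andP [/eqP hsxy hd].
have hxn := hm x; rewrite (negbTE hx) hsxy eqxx /= in hxn.
have hyin : lo <= pos y <= hi by move: (hm y); rewrite mem_head eqxx /=.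
exists (Num.min lo (pos x)), (Num.max hi (pos x)); split; first lia.
move=> e; rewrite in_cons hm hsxy.
case: (e =P x) => [->|ne] /=; first by rewrite hsxy eqxx /=; lia.
case: (supp e =P supp y) => hse //=.
have : pos e != pos x by apply/eqP => h; apply: ne; apply: pos_inj => //; rewrite hse hsxy.
lia.
Qed.

Lemma vint_char S : is_vinterval S -> S != fset0 ->
  exists s lo hi, [/\ valid s, lo <= hi & S = blkset s lo hi].
Proof.
move=> [[|x t] [hu hS hsort]] hne.
  by move/eqP: hne => hne; exfalso; apply: hne; apply/fsetP => e; rewrite hS in_fset0.
have [lo [hi [hx hm]]] := chain_char hsort hu.
exists (supp x), lo, hi; split; first exact: valid_supp.
  have := hm x; rewrite mem_head eqxx /= => /esym; lia.
by apply/fsetP => e; rewrite in_blkset ?valid_supp // hS hm.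
Qed.
Lemma ext_blk s lo hi : valid s ->
  ext_part (blkset s lo hi) = blkset s (Num.max lo 0) (Num.min hi (bl s)).
Proof.
move=> hs; apply/fsetP => e; rewrite /ext_part !inE /= !in_blkset // extE.
case: (supp e =P s) => [->|] //=; lia.
Qed.

Lemma int_char S : is_interval S -> S != fset0 ->
  exists s a c, [/\ valid s, 0 <= a, a <= c, c <= bl s & S = blkset s a c].
Proof.
move=> [hv he] hne; have [s [lo [hi [hs hlh hS]]]] := vint_char hv hne.
exists s, lo, hi; split => //.
- have := he (mk s lo); rewrite hS mk_blkset // lexx hlh extE supp_mk // pos_mk //.
  by move=> /(_ isT) /andP [].
- have := he (mk s hi); rewrite hS mk_blkset // lexx hlh extE supp_mk // pos_mk //.
  by move=> /(_ isT) /andP [].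
Qed.

Lemma blk_eq s s' l h l' h' : valid s -> valid s' -> l <= h ->
  blkset s l h = blkset s' l' h' -> [/\ s = s', l = l' & h = h'].
Proof.
move=> hs hs' hlh E.
have hl := mk_blkset l h l hs; rewrite E lexx hlh in_blkset // supp_mk // pos_mk // in hl.
case/andP: hl => /eqP es hl; subst s'.
have := mk_blkset l h h hs; rewrite E mk_blkset // lexx hlh => h2.
have := mk_blkset l h l' hs; rewrite E mk_blkset // => h3.
have := mk_blkset l h h' hs; rewrite E mk_blkset // => h4.
split => //; lia.
Qed.

Lemma fsetU_neq0 (P Q : {fset vseg}) : P != fset0 -> P `|` Q != fset0.
Proof.
move=> /fset0Pn [x hx]; apply/fset0Pn; exists x; by rewrite in_fsetU hx.
Qed.

Lemma adj_vint P Q : adj_vinterval P Q ->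
  exists s lo hi d, [/\ valid s, lo <= hi, (d = 1 \/ d = -1),
     P = blkset s lo hi & Q = blkset s (lo + d) (hi + d)].
Proof.
move=> [hP hQ nP nQ [hU c1 c2]].
have [s1 [l1 [h1 [hs1 lh1 E1]]]] := vint_char hP nP.
have [s2 [l2 [h2 [hs2 lh2 E2]]]] := vint_char hQ nQ.
have [s [l [h [hs lh E]]]] := vint_char hU (fsetU_neq0 Q nP).
have m1 : mk s1 l1 \in P `|` Q by rewrite in_fsetU E1 mk_blkset // lexx lh1.
rewrite E in_blkset // supp_mk // in m1; case/andP: m1 => /eqP es1 _; subst s1.
have m2 : mk s2 l2 \in P `|` Q by rewrite in_fsetU E2 mk_blkset // lexx lh2 orbT.
rewrite E in_blkset // supp_mk // in m2; case/andP: m2 => /eqP es2 _; subst s2.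
have U p : (l <= p <= h) = (l1 <= p <= h1) || (l2 <= p <= h2).
  by rewrite -(mk_blkset _ _ p hs) -E in_fsetU E1 E2 !mk_blkset.
rewrite E E1 E2 !card_blkset // lh1 lh lh2 in c1 c2.
have := U l; have := U h; have := U l1; have := U h1; have := U l2; have := U h2.
rewrite !lexx lh lh1 lh2 /= => u1 u2 u3 u4 u5 u6.
have [[e1 e2]|[e1 e2]] : (l2 = l1 + 1 /\ h2 = h1 + 1) \/ (l2 = l1 - 1 /\ h2 = h1 - 1) by lia.
  by exists s, l1, h1, 1; split => //; [left | rewrite E2 e1 e2].
by exists s, l1, h1, (-1); split => //; [right | rewrite E2 e1 e2].
Qed.
Lemma adj_int_char s a c S1 S : valid s -> a <= c -> S1 = blkset s a c ->
  adj_interval S1 S -> exists lo hi d, [/\ (d = 1 \/ d = -1), a = Num.max lo 0,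
     c = Num.min hi (bl s) & S = blkset s (Num.max (lo + d) 0) (Num.min (hi + d) (bl s))].
Proof.
move=> hs hac E1 [_ _ [P [Q [hPQ e1 e2]]]].
have [s' [lo [hi [d [hs' hlh hd EP EQ]]]]] := adj_vint hPQ.
rewrite e1 EP ext_blk // in E1.
have [es ea ec] := blk_eq hs hs' hac (esym E1); subst s'.
exists lo, hi, d; split => //.
by rewrite e2 EQ ext_blk.
Qed.

Lemma card3 (T1 T2 T3 : {fset vseg}) (F : {fset {fset vseg}}) :
  (forall S, S \in F -> [\/ S = T1, S = T2 | S = T3]) -> (#|` F| <= 3)%N.
Proof.
move=> H; apply: (@leq_trans #|` seq_fset tt [:: T1; T2; T3]|).
  apply: fsubset_leq_card; apply/fsubsetP => S hS; rewrite seq_fsetE !inE.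
  by case: (H S hS) => ->; rewrite eqxx ?orbT.
by rewrite size_seq_fset; apply: leq_trans (size_undup _) _.
Qed.
Theorem lemma4p5 (S1 S2 : {fset vseg}) :
  is_interval S1 -> is_interval S2 -> S1 != fset0 -> S2 != fset0 ->
  same_support S1 S2 ->
  [/\ is_interval (S1 `&` S2),
      (forall F : {fset {fset vseg}},
         (forall S, S \in F -> adj_interval S1 S) -> (#|` F| <= 3)%N)
    & ((1 < #|` S1|)%N -> (1 < #|` S2|)%N -> #|` S1 `&` S2| = 1%N ->
       forall S1' : {fset vseg}, adj_interval S1 S1' ->
         (0 < #|` S1' `&` S2|)%N -> #|` S1' `&` S2| = 2%N)].
Proof.
move=> h1 h2 n1 n2 hss.
have [s [a [c [hs ha hac hcb E1]]]] := int_char h1 n1.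
have [s' [d [f [hs' hd hdf hfb E2]]]] := int_char h2 n2.
have es : s = s'.
  have := hss (mk s a) (mk s' d); rewrite E1 E2 !mk_blkset // !lexx hac hdf.
  by rewrite supp_mk // supp_mk //; apply.
subst s'.
split.
- rewrite E1 E2 blkI //; split; first exact: blkset_vint.
  move=> e; rewrite -blkI // -E1 -E2 in_fsetI => /andP [he _]; exact: h1.2 e he.
- move=> F HF; set b := bl s.
  apply: (@card3 (blkset s (if a == 0 then 0 else a+1) (Num.min (c+1) b))
     (if a == 0 then blkset s 1 (Num.min (c+1) b)
      else blkset s (a-1) (if c == b then b else c-1))
     (blkset s (Num.max (a-1) 0) (c-1))).
  move=> S hS; have [lo [hi [dd [hd' ea ec ES]]]] := adj_int_char hs hac E1 (HF S hS).
  rewrite ES; case: hd' => ->; case: (eqVneq a 0) => a0 /=; case: (eqVneq c b) => cb /=;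
   case: (ltrP lo 0) => l0; case: (ltrP lo 1) => l1; case: (lerP hi b) => hb;
   first [exfalso; lia
         | apply: Or31; apply: blk_ext => // p; lia
         | apply: Or32; apply: blk_ext => // p; lia
         | apply: Or33; apply: blk_ext => // p; lia].
- move=> c1 c2 c3 S1' hadj hpos.
  have [lo [hi [dd [hd' ea ec ES]]]] := adj_int_char hs hac E1 hadj.
  move: c1 c2 c3 hpos; rewrite ES E1 E2 !blkI // !card_blkset //.
  case: hd' => ->; repeat case: ifP => ?; lia.
Qed.
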